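(* For $m\ge1$ define $\gamma_m\in S_{3m+2}$ by $$\gamma_m=3m+2,\ P_1,\ P_2,\ \dots,\ P_m,\ 2m+2,$$ where $P_i=2i,\ 3m+2-i,\ 2i-1$ for $1\le i\le m-1$ and $P_m=2m,\ 2m+1,\ 2m-1$ (so $\gamma_1=52314$, $\gamma_2=82714536$). Then: (1) $\gamma_i$ is a pattern of $\gamma_{i+1}$ for every $i\ge1$; (2) $\gamma_i$ is qlg-$2$-sortable if and only if $i$ is even.
   Context: The $\mathfrak{D}^2\mathfrak{I}$ machine consists of two decreasing stacks $D_1,D_2$ followed in series by an increasing stack $I$. Elements of $D_1,D_2$ must be in decreasing order from top to bottom (top largest); elements of $I$ in increasing order from top to bottom (top smallest). Operations: $d_0$ pushes the next input element into $D_1$; $d_1$ moves the top of $D_1$ to $D_2$; $d_2$ moves the top of $D_2$ to $I$; $d_3$ pops the top of $I$ and appends it to the output. An operation is legal if it respects the stack restrictions; $d_3$ is legal if the popped element is the smallest among the elements not yet output, and also if no other operation is legal. The quasi left-greedy procedure performs at each step the first legal operation in the priority order $d_3\rhd d_1\rhd d_0\rhd d_2$. A permutation is qlg-$2$-sortable if this procedure outputs its elements in increasing order. *)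

(* Defs.v *)
From mathcomp Require Import all_boot.
Set Implicit Arguments. Unset Strict Implicit. Unset Printing Implicit Defensive.

(* A permutation of S_n is represented by its one-line notation, a seq nat
   which is a rearrangement of 1..n. *)

Definition is_pattern (p s : seq nat) : Prop :=
  exists2 t : seq nat, subseq t s &
    size t = size p /\
    forall i j, i < size p -> j < size p ->
      (nth 0 p i < nth 0 p j) = (nth 0 t i < nth 0 t j).

(* Stacks are seqs with the head being the top of the stack. *)
Record mstate := MState {
  inp : seq nat;
  st1 : seq nat;   (* D1, decreasing top to bottom (top largest) *)
  st2 : seq nat;   (* D2, decreasing top to bottom (top largest) *)
  sti : seq nat;   (* I, increasing top to bottom (top smallest) *)
  outp : seq nat
}.

Definition d0_legal (s : mstate) : bool :=
  if inp s is x :: _ then (if st1 s is y :: _ then y < x else true) else false.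
Definition d1_legal (s : mstate) : bool :=
  if st1 s is x :: _ then (if st2 s is y :: _ then y < x else true) else false.
Definition d2_legal (s : mstate) : bool :=
  if st2 s is x :: _ then (if sti s is y :: _ then x < y else true) else false.
Definition d3_legal (s : mstate) : bool :=
  if sti s is x :: _ then
    all (fun y => x <= y) (inp s ++ st1 s ++ st2 s ++ sti s)
    || ~~ [|| d0_legal s, d1_legal s | d2_legal s]
  else false.

Definition do_d0 (s : mstate) : mstate :=
  if inp s is x :: r then MState r (x :: st1 s) (st2 s) (sti s) (outp s) else s.
Definition do_d1 (s : mstate) : mstate :=
  if st1 s is x :: r then MState (inp s) r (x :: st2 s) (sti s) (outp s) else s.
Definition do_d2 (s : mstate) : mstate :=
  if st2 s is x :: r then MState (inp s) (st1 s) r (x :: sti s) (outp s) else s.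
Definition do_d3 (s : mstate) : mstate :=
  if sti s is x :: r then MState (inp s) (st1 s) (st2 s) r (rcons (outp s) x) else s.

Definition qlg_step (s : mstate) : option mstate :=
  if d3_legal s then Some (do_d3 s)
  else if d1_legal s then Some (do_d1 s)
  else if d0_legal s then Some (do_d0 s)
  else if d2_legal s then Some (do_d2 s)
  else None.

Fixpoint qlg_run (fuel : nat) (s : mstate) : mstate :=
  if fuel is f.+1 then
    (if qlg_step s is Some s' then qlg_run f s' else s)
  else s.

(* Each element undergoes at most 4 operations (d0,d1,d2,d3), so the
   procedure halts after at most 4n steps; 4n fuel suffices. *)
Definition qlg_2_sortable (p : seq nat) : bool :=
  outp (qlg_run (4 * size p) (MState p [::] [::] [::] [::])) == sort leq p.

Definition gammaP (m i : nat) : seq nat :=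
  if i < m then [:: i.*2; 3 * m + 2 - i; i.*2.-1]
  else [:: m.*2; m.*2.+1; m.*2.-1].

Definition gamma (m : nat) : seq nat :=
  (3 * m + 2) :: flatten [seq gammaP m i | i <- iota 1 m] ++ [:: m.*2 + 2].

(* Main.v *)
Require Import Defs.
From mathcomp Require Import all_boot zify.
Set Implicit Arguments. Unset Strict Implicit. Unset Printing Implicit Defensive.

Lemma run_step f s s' : qlg_step s = Some s' -> qlg_run f.+1 s = qlg_run f s'.
Proof. by move=> /= ->. Qed.

Lemma run_add a b s : qlg_run (a + b) s = qlg_run b (qlg_run a s).
Proof.
elim: a s => [//|a IH] s /=.
case E: (qlg_step s) => [s'|]; first exact: IH.
by clear IH; case: b => //= b; rewrite E.
Qed.

Definition allof s := inp s ++ st1 s ++ st2 s ++ sti s.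

Lemma d3_off s : 1 \in inp s ++ st1 s ++ st2 s ->
  (if sti s is x :: _ then 1 < x else true) ->
  [|| d0_legal s, d1_legal s | d2_legal s] -> d3_legal s = false.
Proof.
rewrite /d3_legal; case: (sti s) => [//|x r] H1 Hx ->; rewrite orbF.
apply/negP => /allP /(_ 1); rewrite catA catA mem_cat -catA H1 /=.
by move=> /(_ isT); lia.
Qed.

Definition no3 s := (1 \in inp s ++ st1 s ++ st2 s) && (if sti s is x :: _ then 1 < x else true).

Lemma step1 s : no3 s -> d1_legal s -> qlg_step s = Some (do_d1 s).
Proof. move=> /andP[H1 H2] L; rewrite /qlg_step d3_off ?L //; by rewrite orbT. Qed.
Lemma step0 s : no3 s -> ~~ d1_legal s -> d0_legal s -> qlg_step s = Some (do_d0 s).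
Proof. move=> /andP[H1 H2] /negbTE L L0; by rewrite /qlg_step d3_off ?L ?L0. Qed.
Lemma step2 s : no3 s -> ~~ d1_legal s -> ~~ d0_legal s -> d2_legal s -> qlg_step s = Some (do_d2 s).
Proof. move=> /andP[H1 H2] /negbTE L /negbTE L0 L2; rewrite /qlg_step d3_off ?L ?L0 ?L2 //; by rewrite L2 !orbT. Qed.

Lemma run1 f i x r1 s2 si o : no3 (MState i (x::r1) s2 si o) -> d1_legal (MState i (x::r1) s2 si o) ->
  qlg_run f.+1 (MState i (x::r1) s2 si o) = qlg_run f (MState i r1 (x::s2) si o).
Proof. by move=> H L; rewrite (run_step _ (step1 H L)). Qed.
Lemma run0 f x i s1 s2 si o : no3 (MState (x::i) s1 s2 si o) -> ~~ d1_legal (MState (x::i) s1 s2 si o) ->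
  d0_legal (MState (x::i) s1 s2 si o) ->
  qlg_run f.+1 (MState (x::i) s1 s2 si o) = qlg_run f (MState i (x::s1) s2 si o).
Proof. by move=> H L L0; rewrite (run_step _ (step0 H L L0)). Qed.
Lemma run2 f i s1 x r2 si o : no3 (MState i s1 (x::r2) si o) -> ~~ d1_legal (MState i s1 (x::r2) si o) ->
  ~~ d0_legal (MState i s1 (x::r2) si o) -> d2_legal (MState i s1 (x::r2) si o) ->
  qlg_run f.+1 (MState i s1 (x::r2) si o) = qlg_run f (MState i s1 r2 (x::si) o).
Proof. by move=> H L L0 L2; rewrite (run_step _ (step2 H L L0 L2)). Qed.

Fixpoint odds k := if k is k'.+1 then k'.*2.+1 :: odds k' else [::].
Fixpoint evens k := if k is k'.+1 then k'.*2.+2 :: evens k' else [::].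
Definition drest m k := flatten [seq gammaP m i | i <- iota k (m - k).+1] ++ [:: m.*2 + 2].
Arguments drest : simpl never.

Lemma mem1_odds k : (1 \in odds k) = (0 < k).
Proof. elim: k => [//|k IH] /=; rewrite in_cons IH; case: k {IH} => //= k; by rewrite orbT. Qed.
Lemma mem1_evens k : (1 \in evens k) = false.
Proof. by elim: k => [//|k IH] /=; rewrite in_cons IH. Qed.

Lemma drest_cons m k : k < m -> drest m k = gammaP m k ++ drest m k.+1.
Proof.
move=> H; rewrite /drest; have -> : (m - k) = (m - k.+1).+1 by lia.
by rewrite /= -catA.
Qed.
Lemma drest_last m : drest m m = [:: m.*2; m.*2.+1; m.*2.-1; m.*2 + 2].
Proof. by rewrite /drest subnn /= /gammaP ltnn. Qed.
Lemma gammaP_lt m k : k < m -> gammaP m k = [:: k.*2; 3 * m + 2 - k; k.*2.-1].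
Proof. by move=> H; rewrite /gammaP H. Qed.
Lemma drest_head m k : k <= m -> exists r, drest m k = k.*2 :: r.
Proof.
move=> H; case: (ltngtP k m) H => // [H|->] _.
  by rewrite drest_cons // gammaP_lt //; eexists.
by rewrite drest_last; eexists.
Qed.
Lemma gamma_drest m : 1 <= m -> gamma m = (3 * m + 2) :: drest m 1.
Proof. by move=> H; rewrite /gamma /drest; have -> : (m - 1).+1 = m by lia. Qed.

Ltac side := rewrite /no3 /d0_legal /d1_legal /d2_legal /=; rewrite ?(mem_cat, in_cons, mem1_odds, mem1_evens); first [done | lia].
Ltac step := first [ rewrite run1; [|side..] | rewrite run0; [|side..] | rewrite run2; [|side..] ].

Lemma iota_pos a b : 0 < b -> iota a b = a :: iota a.+1 b.-1.
Proof. by case: b. Qed.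
Ltac leq := first [ reflexivity | refine (f_equal2 cons _ _); [lia | leq] | refine (f_equal2 iota _ _); lia
  | rewrite [RHS]iota_pos; [leq | lia] | rewrite [LHS]iota_pos; [leq | lia] | lia ].
Ltac fin := rewrite /=; congr MState; leq.

Definition A m k := MState (drest m k.+1) (odds k) (evens k) (iota (3*m+2-k) k.+1) [::].
Definition B m k := MState (drest m k.+1) (odds k) ((3*m+2-k) :: evens k) (iota (3*m+3-k) k) [::].

Lemma init m : 2 <= m -> qlg_run 9 (MState (gamma m) [::] [::] [::] [::]) = A m 1.
Proof.
move=> H; have [r Hr] := drest_head H.
rewrite gamma_drest; last lia.
rewrite drest_cons; last lia.
rewrite gammaP_lt; last lia.
rewrite /A Hr.
rewrite !cat_cons cat0s.
do 9 step.
by rewrite /=; repeat f_equal; lia.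
Qed.

Lemma AB m k : k.+2 < m -> qlg_run 5 (A m k.+1) = B m k.+2.
Proof.
move=> H; have [r Hr] := drest_head H.
rewrite /A /B drest_cons // gammaP_lt // Hr !cat_cons cat0s.
do 5 step. fin.
Qed.

Lemma BA m k : k.+2 < m -> qlg_run 7 (B m k.+1) = A m k.+2.
Proof.
move=> H; have [r Hr] := drest_head H.
rewrite /A /B drest_cons // gammaP_lt // Hr !cat_cons cat0s.
do 7 step. fin.
Qed.

Lemma AA m j : j.*2.+1 < m -> qlg_run (12 * j) (A m 1) = A m j.*2.+1.
Proof.
elim: j => [//|j IH] H.
have -> : 12 * j.+1 = 12 * j + 5 + 7 by lia.
rewrite run_add (run_add (12 * j) 5) IH; last lia.
rewrite AB; last lia.
rewrite BA; last lia.
by rewrite doubleS.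
Qed.

Definition V m j := MState [::] (odds j) (evens j.-1) (iota j.*2 (3*m+3-j.*2)) [::].

Lemma EndE n : qlg_run 10 (A n.+2 n.+1) = V n.+2 n.+2.
Proof.
rewrite /A /V drest_last.
do 10 step. fin.
Qed.

Lemma VV m j : j.+2 <= m -> qlg_run 3 (V m j.+2) = V m j.+1.
Proof.
move=> H; rewrite /V [in LHS]iota_pos; last lia.
do 3 step. fin.
Qed.

Lemma Vall m j : j.+1 <= m -> qlg_run (3 * j) (V m j.+1) = V m 1.
Proof.
elim: j => [//|j IH] H.
have -> : 3 * j.+1 = 3 + 3 * j by lia.
by rewrite (run_add 3 (3 * j)) VV // IH //; lia.
Qed.

Lemma V1 m : 1 <= m -> qlg_run 2 (V m 1) = MState [::] [::] [::] (iota 1 (3 * m + 2)) [::].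
Proof.
move=> H; rewrite /V.
have -> : 3 * m + 3 - 1.*2 = (3 * m).+1 by lia.
have -> : 3 * m + 2 = (3 * m).+2 by lia.
do 2 step. fin.
Qed.

Lemma Out l k o : 1 <= k -> qlg_run l (MState [::] [::] [::] (iota k l) o) = MState [::] [::] [::] [::] (o ++ iota k l).
Proof.
elim: l k o => [|l IH] k o Hk /=; first by rewrite cats0.
rewrite /qlg_step /d3_legal /= orbT /= IH //=; by rewrite -cats1 -catA.
Qed.

Lemma run3 f i s1 s2 x r o : ~~ d0_legal (MState i s1 s2 (x::r) o) -> ~~ d1_legal (MState i s1 s2 (x::r) o) ->
  ~~ d2_legal (MState i s1 s2 (x::r) o) ->
  qlg_run f.+1 (MState i s1 s2 (x::r) o) = qlg_run f (MState i s1 s2 r (rcons o x)).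
Proof.
move=> /negbTE L0 /negbTE L1 /negbTE L2.
by rewrite /= /qlg_step /d3_legal /= L0 L1 L2 orbT.
Qed.

Lemma EndO n : outp (qlg_run 10 (B n.+3 n.+2)) = [:: n.+3.*2.+1].
Proof.
rewrite /B drest_last.
do 9 step.
rewrite run3 /=; try (rewrite /d0_legal /d1_legal /d2_legal /=; first [done | lia]).
Qed.

Definition allst s := inp s ++ st1 s ++ st2 s ++ sti s ++ outp s.

Lemma perm_d3 s : perm_eq (allst (do_d3 s)) (allst s).
Proof. case: s => i s1 s2 [|x r] o //=; apply/permP => p; rewrite !count_cat /= -cats1 count_cat /=; lia. Qed.
Lemma perm_d1 s : perm_eq (allst (do_d1 s)) (allst s).
Proof. case: s => i [|x r] s2 si o //=; apply/permP => p; rewrite !count_cat /=; lia. Qed.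
Lemma perm_d0 s : perm_eq (allst (do_d0 s)) (allst s).
Proof. case: s => [[|x r]] s1 s2 si o //=; apply/permP => p; rewrite !count_cat /=; lia. Qed.
Lemma perm_d2 s : perm_eq (allst (do_d2 s)) (allst s).
Proof. case: s => i s1 [|x r] si o //=; apply/permP => p; rewrite !count_cat /=; lia. Qed.

Lemma step_perm s s' : qlg_step s = Some s' -> perm_eq (allst s') (allst s).
Proof.
rewrite /qlg_step.
case: ifP => _; first by case=> <-; apply: perm_d3.
case: ifP => _; first by case=> <-; apply: perm_d1.
case: ifP => _; first by case=> <-; apply: perm_d0.
case: ifP => _; first by case=> <-; apply: perm_d2.
by [].
Qed.

Lemma run_perm f s : perm_eq (allst (qlg_run f s)) (allst s).
Proof.
elim: f s => [|f IH] s /=; first exact: perm_refl.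
case E: (qlg_step s) => [s'|]; last exact: perm_refl.
exact: perm_trans (IH s') (step_perm E).
Qed.

Lemma step_outp s s' : qlg_step s = Some s' -> exists t, outp s' = outp s ++ t.
Proof.
case: s => i s1 s2 si o; rewrite /qlg_step.
case: ifP => _; first case=> <-.
  case: si => [|x r] /=; first by exists [::]; rewrite cats0.
  by exists [:: x]; rewrite cats1.
case: ifP => _; first by case=> <-; case: s1 => *; exists [::]; rewrite cats0.
case: ifP => _; first by case=> <-; case: i => *; exists [::]; rewrite cats0.
case: ifP => _; first by case=> <-; case: s2 => *; exists [::]; rewrite cats0.
by [].
Qed.

Lemma run_outp f s : exists t, outp (qlg_run f s) = outp s ++ t.
Proof.
elim: f s => [|f IH] s /=; first by exists [::]; rewrite cats0.
case E: (qlg_step s) => [s'|]; last by exists [::]; rewrite cats0.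
have [t1 E1] := step_outp E; have [t2 E2] := IH s'.
by exists (t1 ++ t2); rewrite E2 E1 catA.
Qed.

Lemma run_final f o : qlg_run f (MState [::] [::] [::] [::] o) = MState [::] [::] [::] [::] o.
Proof. by case: f. Qed.

Definition fsh m v := if v < m.*2.-1 then v else if v < m.*2 + 3 then v + 2 else v + 3.

Lemma fsh_mono m x y : (fsh m x < fsh m y) = (x < y).
Proof. rewrite /fsh; by repeat (case: ifP => ?); lia. Qed.

Lemma map_gamma n : map (fsh n.+1) (gamma n.+1) =
  (3 * n.+2 + 2) :: flatten [seq gammaP n.+2 i | i <- iota 1 n] ++ [:: n.*2 + 4; n.*2 + 5; n.*2 + 3; n.*2 + 6].
Proof.
rewrite /gamma (_ : iota 1 n.+1 = iota 1 n ++ [:: n.+1]); last by have := iotaD 1 n 1; rewrite addn1 add1n.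
rewrite map_cat flatten_cat /= cats0 -catA map_cat map_flatten -map_comp.
have -> : fsh n.+1 (3 * n.+1 + 2) = 3 * n.+2 + 2 by rewrite /fsh; repeat (case: ifP => ?); lia.
congr (_ :: _); congr (_ ++ _).
  congr flatten; apply/eq_in_map => x; rewrite mem_iota => Hx /=.
  rewrite !gammaP_lt; try lia.
  by rewrite /= /fsh; congr [:: _; _; _]; repeat (case: ifP => ?); lia.
rewrite /gammaP ltnn /fsh /=.
by congr [:: _; _; _; _]; repeat (case: ifP => ?); lia.
Qed.

Lemma gamma2 n : gamma n.+2 =
  (3 * n.+2 + 2) :: flatten [seq gammaP n.+2 i | i <- iota 1 n] ++ (gammaP n.+2 n.+1 ++
   ([:: n.*2 + 4; n.*2 + 5; n.*2 + 3] ++ [:: n.*2 + 6])).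
Proof.
rewrite /gamma (_ : iota 1 n.+2 = iota 1 n ++ [:: n.+1; n.+2]); last by have := iotaD 1 n 2; rewrite addn2 add1n.
rewrite map_cat flatten_cat -catA.
congr (_ :: _ ++ _); rewrite /= cats0 -catA; congr (_ ++ _).
by rewrite /gammaP ltnn /=; congr [:: _; _; _; _]; lia.
Qed.

Lemma pattern_part n : is_pattern (gamma n.+1) (gamma n.+2).
Proof.
exists (map (fsh n.+1) (gamma n.+1)); last first.
  split; first by rewrite size_map.
  by move=> i j Hi Hj; rewrite !(nth_map 0) // fsh_mono.
rewrite map_gamma gamma2 /= eqxx.
apply: cat_subseq; first exact: subseq_refl.
exact: suffix_subseq.
Qed.

Lemma size_gamma m : size (gamma m) = 3 * m + 2.
Proof.
rewrite /gamma /= size_cat /=.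
have -> : forall s, size (flatten [seq gammaP m i | i <- s]) = 3 * size s.
  elim=> [//|x s IH]; rewrite /= size_cat IH.
  by rewrite /gammaP; case: ifP => _ /=; lia.
by rewrite size_iota; lia.
Qed.

Lemma even_case j : qlg_2_sortable (gamma j.*2.+2).
Proof.
set m := j.*2.+2.
have Hrun : qlg_run (4 * size (gamma m)) (MState (gamma m) [::] [::] [::] [::]) =
    MState [::] [::] [::] [::] (iota 1 (3 * m + 2)).
  rewrite size_gamma (_ : 4 * (3 * m + 2) = 9 + (12 * j + (10 + (3 * (j.*2.+1) + (2 + (3 * m + 2)))))); last by rewrite /m; lia.
  rewrite run_add init; last by rewrite /m; lia.
  rewrite run_add AA; last by rewrite /m; lia.
  rewrite run_add EndE run_add Vall; last by rewrite /m; lia.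
  rewrite run_add V1; last by rewrite /m; lia.
  by rewrite Out.
rewrite /qlg_2_sortable Hrun.
have P : perm_eq (iota 1 (3 * m + 2)) (gamma m ++ [::] ++ [::] ++ [::] ++ [::]).
  by have := run_perm (4 * size (gamma m)) (MState (gamma m) [::] [::] [::] [::]); rewrite Hrun.
rewrite !cats0 in P.
rewrite -(perm_sortP leq_total leq_trans anti_leq _ _ P) sorted_sort //.
  exact: leq_trans.
exact: iota_sorted.
Qed.

Lemma one_in m : 2 <= m -> 1 \in gamma m.
Proof.
move=> H; rewrite gamma_drest; last lia.
rewrite drest_cons; last lia.
rewrite gammaP_lt; last lia.
by rewrite in_cons !mem_cat !inE eqxx !orbT.
Qed.

Lemma odd_case j : qlg_2_sortable (gamma j.*2.+3) = false.
Proof.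
set m := j.*2.+3.
rewrite /qlg_2_sortable size_gamma.
rewrite (_ : 4 * (3 * m + 2) = 9 + (12 * j + (5 + (10 + (12 * j + 20))))); last by rewrite /m; lia.
rewrite run_add init; last by rewrite /m; lia.
rewrite run_add AA; last by rewrite /m; lia.
rewrite run_add AB; last by rewrite /m; lia.
rewrite run_add.
have [t Ht] := run_outp (12 * j + 20) (qlg_run 10 (B j.*2.+3 j.*2.+2)).
rewrite Ht EndO.
apply/negP => /eqP E.
have S := sort_sorted leq_total (gamma m).
have M1 : 1 \in sort leq (gamma m) by rewrite mem_sort one_in // /m.
rewrite -E /= in S M1.
have := order_path_min leq_trans S.
move: M1; rewrite in_cons => /orP [/eqP|]; first lia.
by move=> M1 /allP /(_ _ M1); lia.
Qed.

Theorem mainTheorem14 :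
  (forall i, 1 <= i -> is_pattern (gamma i) (gamma i.+1)) /\
  (forall i, 1 <= i -> qlg_2_sortable (gamma i) = ~~ odd i).
Proof.
split.
  by case=> // n _; exact: pattern_part.
move=> i Hi; have Hd := odd_double_half i.
case Ho: (odd i) Hd => /= Hd.
  case Hh: (i./2) Hd => [|j] Hd.
    by rewrite -Hd; vm_compute.
  rewrite -Hd (_ : 1 + j.+1.*2 = j.*2.+3); last lia.
  exact: odd_case.
case Hh: (i./2) Hd => [|j] Hd; first lia.
rewrite -Hd (_ : j.+1.*2 = j.*2.+2); last lia.
exact: even_case.
Qed.
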